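(* Let $K\ge 1$ be an integer, let $\lambda_1,\dots,\lambda_K>0$, $\Psi>0$ and $r_{min}\ge 0$ be real numbers. For $\rho=(\rho_1,\dots,\rho_K)\in[0,\infty)^K$ and $i\in\{1,\dots,K\}$ define the (relaxed) unicast rate $$r_i^U(\rho)=\log_2\!\left(1+\frac{\rho_i\lambda_i}{\sum_{j=1}^{i-1}\rho_j\lambda_i+\Psi}\right).$$ Define $\rho_{1,min},\dots,\rho_{K,min}$ recursively as the numbers for which user $i$ achieves exactly rate $r_{min}$ when user $j$ is allocated $\rho_{j,min}$ for all $j$, i.e. $$r_{min}=\log_2\!\left(1+\frac{\rho_{i,min}\lambda_i}{\sum_{j=1}^{i-1}\rho_{j,min}\lambda_i+\Psi}\right),\quad\text{equivalently}\quad \rho_{i,min}=(2^{r_{min}}-1)\Big(\sum_{j=1}^{i-1}\rho_{j,min}+\Psi/\lambda_i\Big),$$ and let $\rho_{sum}^{min}=\sum_{i=1}^K\rho_{i,min}$. Then $$\rho_{sum}^{min}=(2^{r_{min}}-1)\,\Psi\sum_{i=0}^{K-1}\frac{2^{i r_{min}}}{\lambda_{K-i}}.$$ Moreover, let $\triangle\rho_1,\dots,\triangle\rho_K\ge 0$, set $\rho_i=\rho_{i,min}+\triangle\rho_i$ for each $i$, and let $\triangle r_i^U=r_i^U(\rho)-r_{min}$. Define $$\rho_i^e=\Big(\triangle\rho_i-(2^{r_{min}}-1)\sum_{j=1}^{i-1}\triangle\rho_j\Big)2^{(K-i)r_{min}},\qquad n_i^e=\Big(\Psi/\lambda_i+\sum_{j=1}^{i}\rho_{j,min}\Big)2^{(K-i)r_{min}}.$$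 Then $\sum_{i=1}^K r_i^U(\rho)=Kr_{min}+\sum_{i=1}^K\triangle r_i^U$ and, for every $i\in\{1,\dots,K\}$, $$\triangle r_i^U=\log_2\!\left(1+\frac{\rho_i^e}{n_i^e+\sum_{j=1}^{i-1}\rho_j^e}\right).$$
   Context: This arises in a NOMA downlink with $K$ users decoded by successive interference cancellation: $\rho_i$ is the transmit SNR allocated to user $i$'s unicast signal, $\lambda_i$ is user $i$'s estimated channel gain, and $\Psi>0$ is a constant effective noise term (in the paper $\Psi=\rho b+a$ with $a=1/(1-\phi^2)$, $b=\phi^2\Omega_\epsilon/(1-\phi^2)$). $\rho_{i,min}$ is the minimum SNR giving user $i$ rate $r_{min}$ and $\triangle\rho_i$ is the excess SNR allocated to user $i$. Empty sums are zero. *)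

(* Defs.v *)
From mathcomp Require Import all_boot all_order all_algebra.
From mathcomp Require Import all_classical all_reals all_analysis.
Set Implicit Arguments. Unset Strict Implicit. Unset Printing Implicit Defensive.
Import Order.TTheory GRing.Theory Num.Theory.
Local Open Scope ring_scope.

Definition log2 {R : realType} (x : R) : R := ln x / ln 2.

(* relaxed unicast rate of user i (users indexed 1..K, sequences nat -> R) *)
Definition rU {R : realType} (lam : nat -> R) (Psi : R) (rho : nat -> R) (i : nat) : R :=
  log2 (1 + rho i * lam i / (\sum_(1 <= j < i) rho j * lam i + Psi)).

Definition rho_e {R : realType} (K : nat) (rmin : R) (drho : nat -> R) (i : nat) : R :=
  (drho i - (2 `^ rmin - 1) * \sum_(1 <= j < i) drho j) * 2 `^ ((K - i)%:R * rmin).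

Definition n_e {R : realType} (K : nat) (rmin : R) (lam : nat -> R) (Psi : R)
  (rhomin : nat -> R) (i : nat) : R :=
  (Psi / lam i + \sum_(1 <= j < i.+1) rhomin j) * 2 `^ ((K - i)%:R * rmin).

(* Main.v *)
Require Import Defs.
From mathcomp Require Import all_boot all_order all_algebra.
From mathcomp Require Import all_classical all_reals all_analysis.
From mathcomp Require Import ring lra.
Import Order.TTheory GRing.Theory Num.Theory.
Local Open Scope ring_scope.

Theorem proposition1 (R : realType) (K : nat) (lam : nat -> R) (Psi rmin : R)
  (rhomin drho : nat -> R) :
  (1 <= K)%N ->
  (forall i, (1 <= i <= K)%N -> 0 < lam i) ->
  0 < Psi -> 0 <= rmin ->
  (forall i, (1 <= i <= K)%N ->
     rhomin i = (2 `^ rmin - 1) * (\sum_(1 <= j < i) rhomin j + Psi / lam i)) ->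
  (forall i, (1 <= i <= K)%N -> 0 <= drho i) ->
  let rho := fun i => rhomin i + drho i in
  let dr := fun i => rU lam Psi rho i - rmin in
  \sum_(1 <= i < K.+1) rhomin i
    = (2 `^ rmin - 1) * Psi * \sum_(0 <= i < K) 2 `^ (i%:R * rmin) / lam (K - i)%N
  /\ \sum_(1 <= i < K.+1) rU lam Psi rho i = K%:R * rmin + \sum_(1 <= i < K.+1) dr i
  /\ (forall i, (1 <= i <= K)%N ->
        dr i = log2 (1 + rho_e K rmin drho i
                         / (n_e K rmin lam Psi rhomin i + \sum_(1 <= j < i) rho_e K rmin drho j))).
Proof.
move=> K1 lam0 Psi0 r0 hmin d0 rho dr.
set a := 2 `^ rmin.
have a1 : 1 <= a.
  have := @ge0_ler_powR R rmin r0 1 2.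
  rewrite powR1 => -> //; rewrite ?nnegrE //; lra.
have pw : forall n : nat, 2 `^ (n%:R * rmin) = a ^+ n.
  by move=> n; rewrite mulrC powRrM powR_mulrn // powR_ge0.
set S := fun n => \sum_(1 <= j < n.+1) rhomin j.
have Srec : forall n, (n < K)%N -> S n.+1 = a * S n + (a - 1) * (Psi / lam n.+1).
  move=> n nK; rewrite /S big_nat_recr //= hmin -/a; last by apply/andP; split.
  ring.
have S0 : forall n, (n <= K)%N -> 0 <= S n.
  elim=> [|n IH] nK; first by rewrite /S big_geq.
  rewrite Srec //; have := IH (ltnW nK); have := lam0 n.+1 (nK).
  move=> l0 s0; apply: addr_ge0; first by apply: mulr_ge0 => //; lra.
  apply: mulr_ge0; first lra. by apply: divr_ge0 => //; apply: ltW.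
split.
  have : forall n, (n <= K)%N -> S n =
     (a - 1) * Psi * \sum_(0 <= i < n) a ^+ i / lam (n - i)%N.
    elim=> [|n IH] nK; first by rewrite /S !big_geq // mulr0.
    rewrite Srec // IH ?(ltnW nK) // big_nat_recl //= subn0 expr0 mul1r.
    under [X in _ = _ * (_ + X)]eq_bigr do rewrite subSS exprS -mulrA.
    rewrite -[X in _ = _ * (_ + X)]mulr_sumr. ring.
  move=> /(_ K (leqnn K)); rewrite /S => ->.
  congr (_ * _); apply: eq_bigr => i _; congr (_ * _); exact: (esym (pw i)).
split.
  rewrite /dr big_split /= sumrN big_const_nat iter_addr addr0 subSS subn0.
  rewrite -mulr_natl. ring.
have Ee : forall n, (n <= K)%N -> \sum_(1 <= j < n.+1) rho_e K rmin drho j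
    = a ^+ (K - n) * \sum_(1 <= j < n.+1) drho j.
  elim=> [|n IH] nK; first by rewrite !big_geq // mulr0.
  rewrite big_nat_recr //= IH ?(ltnW nK) // [in RHS]big_nat_recr //= /rho_e.
  rewrite pw -/a -(subnSK nK) exprS. ring.
have l2a : rmin = log2 a.
  have l2 : 0 < ln (2 : R) by apply: ln_gt0; lra.
  by rewrite /log2 /a ln_powR mulfK // gt_eqF.
have a0 : 0 < a by lra.
have Lg : forall X Y, 0 < X -> X = a * Y -> log2 X - rmin = log2 Y.
  move=> X Y X0 XY; have Y0 : 0 < Y.
    have -> : Y = X / a by rewrite XY mulrAC divff ?mul1r // gt_eqF.
    by apply: divr_gt0.
  by rewrite l2a XY /log2 lnM ?posrE // mulrDl addrC addKr.
move=> i /andP[i1 iK]; case: i i1 iK => [//|k] _ kK.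
rewrite /dr /rU (Ee k (ltnW kK)) /rho_e /n_e (@big_nat_recr _ _ _ k.+1 1 rhomin) //= (hmin k.+1) ?kK // -/a.
rewrite pw -/a -(subnSK kK) exprS /rho -mulr_suml big_split /=.
rewrite (hmin k.+1) ?kK // -/a.
have L0 := lam0 k.+1 kK.
have Sm0 := S0 k (ltnW kK).
have Dm0 : 0 <= \sum_(1 <= j < k.+1) drho j.
  rewrite big_nat_cond; apply: sumr_ge0 => j /andP[/andP[j1 jk] _].
  apply: d0; rewrite j1 /=; apply: leq_trans (ltnW kK); exact: jk.
have dk0 := d0 k.+1 kK.
have b0 : 0 < a ^+ (K - k.+1) by apply: exprn_gt0.
rewrite /S in Sm0.
move: Sm0 Dm0 dk0 b0.
set Sm := \sum_(1 <= j < k.+1) rhomin j.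
set Dm := \sum_(1 <= j < k.+1) drho j.
set b := a ^+ (K - k.+1).
set dk := drho k.+1.
set L := lam k.+1.
move=> Sm0 Dm0 dk0 b0.
have -> : Psi = (Psi / L) * L by rewrite mulfVK // gt_eqF.
set q := Psi / L.
have q0 : 0 < q by rewrite /q divr_gt0.
rewrite mulfK ?gt_eqF //.
apply: Lg.
  have D0 : 0 < (Sm + Dm) * L + q * L.
    by rewrite -mulrDl; apply: mulr_gt0 => //; lra.
  have N0 : 0 <= ((a - 1) * (Sm + q) + dk) * L.
    apply: mulr_ge0; last exact: ltW.
    apply: addr_ge0 => //; apply: mulr_ge0; [lra | exact: addr_ge0 (ltW q0)].
  apply: (lt_le_trans ltr01); rewrite lerDl; exact: divr_ge0 N0 (ltW D0).
field.
have h1 : 0 <= (a - 1) * (Sm + q) by apply: mulr_ge0; lra.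
have h2 : 0 < q + (Sm + (a - 1) * (Sm + q)) by lra.
have h3 : 0 <= a * b * Dm by apply: mulr_ge0 => //; apply: mulr_ge0; lra.
have h4 := mulr_gt0 h2 b0.
have h5 : 0 < Sm + Dm + q by lra.
have h6 := mulr_gt0 h5 L0.
apply/andP; split; rewrite gt_eqF //; first lra.
by rewrite -mulrDl.
Qed.
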